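(* Suppose $\sigma$ is an automorphism of $D$. Then $f(t)=t^3-a\in D[t;\sigma]$ is irreducible if and only if $\sigma^2(b)\sigma(b)b\neq a$ for all $b\in D$.
   Context: $D$ is an associative division ring, $\sigma$ a ring automorphism of $D$, and $D[t;\sigma]$ the skew polynomial ring with $ta=\sigma(a)t$. A polynomial $f$ is irreducible if it is not a unit and has no factorization $f=gh$ with $\deg g,\deg h<\deg f$. *)

(* Defs.v *)
From HB Require Import structures.
From mathcomp Require Import all_boot all_order all_algebra.
Set Implicit Arguments. Unset Strict Implicit. Unset Printing Implicit Defensive.
Import GRing.Theory.
Local Open Scope ring_scope.

(* Skew polynomial ring D[t; s] with t a = s(a) t, represented on the additive
   group {poly D} (coefficient lists, p`_i = coefficient of t^i, written on the
   left: p = sum_i p_i t^i).  Product: (p_i t^i)(q_j t^j) = p_i s^i(q_j) t^(i+j). *)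
Definition skew_mul (D : nzRingType) (s : D -> D) (p q : {poly D}) : {poly D} :=
  \poly_(k < size p + size q) \sum_(i < k.+1) p`_i * iter i s q`_(k - i).

Definition skew_unit (D : nzRingType) (s : D -> D) (f : {poly D}) : Prop :=
  exists g : {poly D}, skew_mul s f g = 1 /\ skew_mul s g f = 1.

Definition skew_irreducible (D : nzRingType) (s : D -> D) (f : {poly D}) : Prop :=
  ~ skew_unit s f /\
  forall g h : {poly D}, f = skew_mul s g h ->
    ~ ((size g < size f)%N /\ (size h < size f)%N).

(* Main.v *)
Require Import Defs.
From HB Require Import structures.
From mathcomp Require Import all_boot all_order all_algebra.
From mathcomp Require Import zify.
Import GRing.Theory.
Local Open Scope ring_scope.

Lemma iter_s0 (D : nzRingType) (s : D -> D) (s0 : s 0 = 0) n : iter n s 0 = 0.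
Proof. by elim: n => //= n ->. Qed.

Lemma coef_skew (D : nzRingType) (s : D -> D) (s0 : s 0 = 0) (p q : {poly D}) k :
  (skew_mul s p q)`_k = \sum_(i < k.+1) p`_i * iter i s q`_(k - i).
Proof.
rewrite /skew_mul coef_poly; case: ltnP => // hk.
symmetry; apply: big1 => i _.
have [hi|hi] := ltnP i (size p).
  have -> : q`_(k-i) = 0.
    apply: nth_default. move: hi hk; move: (nat_of_ord i) => j; move: (size p) (size q) => m n; lia.
  by rewrite iter_s0 // mulr0.
by rewrite nth_default // mul0r.
Qed.


Lemma sizef (D : nzRingType) (a : D) : size ('X^3 - a%:P) = 4%N.
Proof. by rewrite size_XnsubC. Qed.
Lemma fcoef (D : nzRingType) (a : D) k : ('X^3 - a%:P)`_k = (k == 3%N)%:R - (if k == 0%N then a else 0).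
Proof. by rewrite coefB coefXn coefC. Qed.

Ltac expand := rewrite coef_skew // !big_ord_recr big_ord0 /= ?subSS ?subn0 ?subnn.

Theorem mainTheorem14 (D : unitRingType)
  (Ddiv : forall x : D, x != 0 -> x \is a GRing.unit)
  (sigma : {rmorphism D -> D}) (sigma_bij : bijective sigma) (a : D) :
  skew_irreducible sigma ('X^3 - a%:P) <->
  (forall b : D, sigma (sigma b) * sigma b * b != a).
Proof.
have s0 : sigma 0 = 0 := rmorph0 _.
have sinj := bij_inj sigma_bij.
have snz : forall x, x != 0 -> sigma x != 0.
  by move=> x; apply: contra => /eqP h; apply/eqP; apply: (sinj); rewrite h s0.
split.
- move=> [nu irr] b; apply/negP => /eqP hab.
  apply: (irr (Poly [:: sigma (sigma b) * sigma b; sigma (sigma b); 1]) (Poly [:: -b; 1])).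
    apply/polyP => k; rewrite fcoef.
    case: k => [|[|[|[|[|k]]]]].
    all: try by (rewrite coef_skew // !big_ord_recr big_ord0 !coef_Poly /= ?subSS ?subn0 ?subnn ?rmorphN ?rmorph1 ?s0 ?mulr0 ?mul0r ?mulr1 ?mul1r ?add0r ?addr0 ?subr0 ?sub0r ?mulrN -?hab ?subrr ?oppr0).
    rewrite /skew_mul coef_poly ifF /=; first by rewrite subr0.
    apply/negbTE; rewrite -leqNgt.
    have h1 := size_Poly [:: (sigma (sigma b) * sigma b)%R; sigma (sigma b); 1].
    have h2 := size_Poly [:: - b; 1].
    move: h1 h2 => /=; move: (size _) (size _) => m n; lia.
  by rewrite sizef; split; apply: leq_ltn_trans (size_Poly _) _.
move=> hcond; split.
  move=> [g [hfg _]].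
  have [g0|gnz] := eqVneq g 0.
    move: (congr1 (fun p : {poly D} => p`_0) hfg) => /=.
    rewrite coef_skew // big_ord1 g0 coef0 /= coef1 mulr0 => /eqP; by rewrite eq_sym oner_eq0.
  have hn : size g = ((size g).-1).+1 by rewrite prednK // size_poly_gt0.
  move: hn; move: (lead_coef_eq0 g); rewrite /lead_coef (negbTE gnz).
  move: ((size g).-1) => n hln hn.
  move: (congr1 (fun p : {poly D} => p`_(n.+3)) hfg) => /=.
  rewrite coef_skew // coef1 /= !big_ord_recl /= big1; last first.
    by move=> i _; rewrite fcoef /= subr0 mul0r.
  rewrite !fcoef /= ?subSS ?subn0 [g`_n.+3]nth_default; last by rewrite hn; apply: leq_trans (leqnSn _) (leqnSn _). rewrite mulr0 !subr0 !mul0r mul1r !add0r addr0.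
  move/eqP; apply/negP; do 3 apply: (snz _).
  by apply/negP => /eqP h; rewrite h eqxx in hln.
move=> g h hf [hg hh]; rewrite sizef in hg hh.
have E k := congr1 (fun p : {poly D} => p`_k) hf.
have g3 : g`_3 = 0 by apply: nth_default.
have g4 : g`_4 = 0 by apply: nth_default; apply: leq_trans (ltnW hg) _.
have h3 : h`_3 = 0 by apply: nth_default.
have h4 : h`_4 = 0 by apply: nth_default; apply: leq_trans (ltnW hh) _.
have E0 := E 0%N; have E1 := E 1%N; have E2 := E 2%N; have E3 := E 3%N; have E4 := E 4%N.
move: E0 E1 E2 E3 E4 => /=.
rewrite !fcoef !coef_skew // !big_ord_recr !big_ord0 /= ?subSS ?subn0 ?subnn g3 g4 h3 h4 ?s0 ?mul0r ?mulr0 ?add0r ?addr0 ?subr0 ?sub0r ?oppr0.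
move=> E0 E1 E2 E3 E4.
clear E hf.
have ea : a = -(g`_0 * h`_0) by rewrite -E0 opprK.
move: E1 E2 E3 E4 ea; move: (g`_0) (g`_1) (g`_2) (h`_0) (h`_1) (h`_2) => g0 g1 g2 h0 h1 h2 E1 E2 E3 E4 ea.
have [g2z|g2nz] := eqVneq g2 0.
  move: E2 E3; rewrite g2z !mul0r !addr0 => E2 E3.
  have g1nz : g1 != 0 by apply/negP => /eqP g1z; move: E3; rewrite g1z mul0r => /eqP; rewrite oner_eq0.
  have u := Ddiv _ g1nz.
  have sh2 : sigma h2 * g1 = 1.
    have -> : sigma h2 = g1^-1 by rewrite -[sigma h2]mul1r -(mulVr u) -mulrA -E3 mulr1.
    by rewrite mulVr.
  have e1 : g1 * sigma h0 = -(g0*h1) by apply/eqP; rewrite -addr_eq0 addrC -E1.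
  have e2 : g1 * sigma h1 = -(g0*h2) by apply/eqP; rewrite -addr_eq0 addrC -E2.
  have Eh0 : sigma h0 = -(sigma h2 * g0 * h1) by rewrite -[sigma h0]mul1r -sh2 -mulrA e1 mulrN !mulrA.
  have Eh1 : sigma h1 = -(sigma h2 * g0 * h2) by rewrite -[sigma h1]mul1r -sh2 -mulrA e2 mulrN !mulrA.
  have [sinv sK Ks] := sigma_bij.
  pose e := -(g0 * h2).
  pose b := sinv (sinv e).
  have hb : sigma (sigma b) = e by rewrite /b !Ks.
  apply: (negP (hcond b)); apply/eqP; apply: (sinj); apply: (sinj).
  rewrite !rmorphM hb ea /e !(rmorphN, rmorphM) Eh0 !(rmorphN, rmorphM) Eh1.
  by rewrite ?mulrN ?mulNr ?opprK !mulrA.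
have u2 := Ddiv _ g2nz.
have h2z : h2 = 0.
  have : sigma (sigma h2) = 0 by rewrite -[sigma (sigma h2)]mul1r -(mulVr u2) -mulrA -E4 mulr0.
  move=> hh2; apply: (sinj); rewrite s0; apply: (sinj); by rewrite s0.
move: E2 E3; rewrite h2z ?s0 !mulr0 !add0r => E2 E3.
have h1nz : h1 != 0 by apply/negP => /eqP h1z; move: E3; rewrite h1z s0 s0 mulr0 => /eqP; rewrite oner_eq0.
have u1 := Ddiv _ h1nz.
pose b := -(h1^-1 * h0).
have hb : h0 = -(h1*b) by rewrite /b mulrN opprK mulrA mulrV // mul1r.
clearbody b.
have e2 : g1 * sigma h1 = sigma (sigma b).
  have -> : g1 * sigma h1 = -(g2 * sigma (sigma h0)) by apply/eqP; rewrite -addr_eq0 -E2.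
  by rewrite hb !(rmorphN, rmorphM) mulrN opprK mulrA -E3 mul1r.
have e1 : g0 * h1 = sigma (sigma b) * sigma b.
  have -> : g0 * h1 = -(g1 * sigma h0) by apply/eqP; rewrite -addr_eq0 -E1.
  by rewrite hb !(rmorphN, rmorphM) mulrN opprK mulrA e2.
apply: (negP (hcond b)); apply/eqP.
by rewrite ea hb mulrN opprK mulrA e1.
Qed.
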